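(* Consider a graph orientation instance whose graph $G=(V,E)$ is a star with center $v$ and leaf set $H_v=V\setminus\{v\}$, with arbitrary query costs. Let $L$ be the algorithm that queries $v$ and then queries every leaf that is mandatory, and $R$ the algorithm that queries all leaves and then queries $v$ if it is mandatory; so $\mathbb E[L]=c_v+\sum_{u\in H_v}p_uc_u$ and $\mathbb E[R]=p_vc_v+c(H_v)$. If $\mathbb E[L]=\mathbb E[R]$, then $\mathbb E[L]\le\frac43\mathbb E[\mathrm{OPT}]$.
   Context: An instance of the graph orientation problem consists of a graph $G=(V,E)$ and, for each vertex $u$, a query cost $c_u\ge0$ and a continuous distribution $d_u$ with minimal support interval $I_u$; for each edge the two intervals intersect. Weights $w_u\sim d_u$ are independent and querying $u$ reveals $w_u$ at cost $c_u$; $c(S)=\sum_{u\in S}c_u$. For a realization, $Q$ is a feasible query set if knowing $w_u$ for $u\in Q$ and only the intervals for unqueried vertices suffices to identify, for every edge, its endpoint of minimum weight; $\mathbb E[\mathrm{OPT}]$ is the expected minimum cost of a feasible query set. A vertex is mandatory for a realization if it belongs to every feasible query set; $p_u$ is the probability that $u$ is mandatory. (In a star, the center $v$ is mandatory iff $w_u\in I_v$ for some leaf $u$, and a leaf $u$ is mandatory iff $w_v\in I_u$.) *)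

(* Defs.v *)
From HB Require Import structures.
From mathcomp Require Import all_boot all_order all_algebra.
From mathcomp Require Import all_classical all_reals all_analysis.
Set Implicit Arguments. Unset Strict Implicit. Unset Printing Implicit Defensive.
Import Order.TTheory GRing.Theory Num.Theory.
Local Open Scope classical_set_scope.
Local Open Scope ring_scope.

Section GraphOrientation.
Variables (R : realType) (V : finType).

Definition oint (a b : \bar R) : set R := [set x | (a < x%:E < b)%E].

Definition consistent (I : V -> set R) (w : V -> R) (Q : {set V}) (w' : V -> R) :=
  forall u, (u \in Q -> w' u = w u) /\ (u \notin Q -> I u (w' u)).

(* The endpoint of minimum weight of edge {x,y} is identified: some endpoint
   has weight <= the other one in every consistent weight vector. *)
Definition edge_determined I w Q (x y : V) :=
  exists z, (z = x \/ z = y) /\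
    forall w', consistent I w Q w' -> w' z <= w' x /\ w' z <= w' y.

Definition feasible (E : rel V) I w Q :=
  forall x y, E x y -> edge_determined I w Q x y.

Definition qcost (c : V -> R) (Q : {set V}) : R := \sum_(u in Q) c u.

(* minimum cost of a feasible query set (setT is always feasible). *)
Definition opt (E : rel V) I (c : V -> R) w : R :=
  \big[Num.min/qcost c [set: V]%SET]_(Q : {set V} | `[< feasible E I w Q >]) qcost c Q.

Definition mandatory (E : rel V) I w (u : V) :=
  forall Q, feasible E I w Q -> u \in Q.

Definition star (v : V) : rel V :=
  fun x y => ((x == v) && (y != v)) || ((y == v) && (x != v)).

End GraphOrientation.

Section Prob.
Variables (R : realType) (d : measure_display) (T : measurableType d)
  (P : probability T R) (V : finType).
Local Open Scope ereal_scope.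

Definition mutually_independent (W : V -> T -> R) :=
  forall B : V -> set R, (forall u, measurable (B u)) ->
    P (\bigcap_(u in [set: V]) (W u @^-1` B u)) = \prod_(u : V) P (W u @^-1` B u).

Definition atomless (X : T -> R) := forall x : R, P (X @^-1` [set x]) = 0.

(* oint a b is the (open) minimal support interval of the law of X:
   a = ess inf X, b = ess sup X. *)
Definition min_support_interval (X : T -> R) (a b : \bar R) :=
  a < b /\ P (X @^-1` oint a b) = 1 /\
  forall x : R, a < x%:E < b ->
    0 < P (X @^-1` [set y | y < x]%R) /\ 0 < P (X @^-1` [set y | x < y]%R).

Definition pmand (E : rel V) (I : V -> set R) (W : V -> T -> R) (u : V) :=
  P [set t | mandatory E I (fun x => W x t) u].

Definition EOPT (E : rel V) I (c : V -> R) (W : V -> T -> R) :=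
  \int[P]_t (opt E I c (fun x => W x t))%:E.
End Prob.

(* Main.v *)
Require Import Defs.
From HB Require Import structures.
From mathcomp Require Import all_boot all_order all_algebra.
From mathcomp Require Import all_classical all_reals all_analysis.
From mathcomp Require Import lra ring measurable_realfun.
Import Order.TTheory GRing.Theory Num.Theory.
Local Open Scope classical_set_scope.
Local Open Scope ring_scope.

Section Pts.
Context {R : realType}.
Implicit Types (a b : \bar R) (x y : R).

Lemma oint_conv a b x y z : oint a b x -> oint a b y -> x <= z <= y -> oint a b z.
Proof.
rewrite /oint /= => /andP[ax xb] /andP[ay yb] /andP[xz zy].
by rewrite (lt_le_trans ax) ?lee_fin // (le_lt_trans _ yb) ?lee_fin.
Qed.

Lemma oint_up a b x : oint a b x -> exists y, oint a b y /\ x < y.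
Proof.
move=> hx; move: (hx); rewrite /oint /= => /andP[ax xb].
case: b xb hx => [r| |] xb hx.
- exists ((x + r) / 2); have xr : x < r by rewrite -lte_fin.
  split; last by lra.
  rewrite /oint /= (lt_trans ax) ?lte_fin /=; lra.
- exists (x + 1); split; last by lra.
  by rewrite /oint /= ltry andbT (lt_trans ax)// lte_fin; lra.
- by [].
Qed.

Lemma oint_down a b x : oint a b x -> exists y, oint a b y /\ y < x.
Proof.
move=> hx; move: (hx); rewrite /oint /= => /andP[ax xb].
case: a ax hx => [r| |] ax hx.
- exists ((x + r) / 2); have xr : r < x by rewrite -lte_fin.
  split; last by lra.
  rewrite /oint /= (lt_trans _ xb) ?lte_fin //=; lra.
- by [].
- exists (x - 1); split; last by lra.
  by rewrite /oint /= ltNyr /= (lt_trans _ xb)// lte_fin; lra.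
Qed.

Lemma oint_ne a b : (a < b)%E -> exists x, oint a b x.
Proof.
case: a => [r| |]; case: b => [s| |] //= ab.
- exists ((r + s) / 2); rewrite /oint /= !lte_fin.
  rewrite lte_fin in ab; apply/andP; split; lra.
- by exists (r + 1); rewrite /oint /= ltry lte_fin andbT; lra.
- by exists (s - 1); rewrite /oint /= ltNyr lte_fin; lra.
- by exists 0; rewrite /oint /= ltNyr ltry.
Qed.

Lemma oint_out a b x : ~ oint a b x -> (x%:E <= a)%E \/ (b <= x%:E)%E.
Proof.
rewrite /oint /= => /negP; rewrite negb_and -!leNgt => /orP[]; by [left|right].
Qed.
End Pts.
Arguments oint_conv {R a b x y z}.
Arguments oint_up {R a b x}.
Arguments oint_down {R a b x}.
Arguments oint_out {R a b x}.


Section Comb.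
Variables (R : realType) (V : finType) (v : V) (a b : V -> \bar R).
Hypothesis hab : forall u, (a u < b u)%E.
Hypothesis hedge : forall u, u != v -> exists x, oint (a u) (b u) x /\ oint (a v) (b v) x.
Local Notation I := (fun u => oint (a u) (b u)).
Implicit Types (Q : {set V}) (x y u : V) (w : V -> R).

Definition pt u : R := xget 0 (I u).
Lemma ptP u : I u (pt u).
Proof. by apply: xgetPex; apply: oint_ne. Qed.

Lemma det_sym w Q x y : edge_determined I w Q x y -> edge_determined I w Q y x.
Proof. by move=> [z [hz H]]; exists z; split; [tauto|move=> w' /H []]. Qed.

Lemma det_in w Q x y : x \in Q -> y \in Q -> edge_determined I w Q x y.
Proof.
move=> xQ yQ; have [wxy|wyx] := lerP (w x) (w y).
- exists x; split; first by left.
  by move=> w' /[dup] /(_ x) [/(_ xQ) -> _] /(_ y) [/(_ yQ) -> _].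
- exists y; split; first by right.
  move=> w' /[dup] /(_ x) [/(_ xQ) -> _] /(_ y) [/(_ yQ) -> _]; split => //.
  exact: ltW.
Qed.

Lemma det_out w Q x y : x \in Q -> ~ I y (w x) -> edge_determined I w Q x y.
Proof.
move=> xQ nI; case: (boolP (y \in Q)) => yQ; first exact: det_in.
have [wa|bw] := oint_out nI.
- exists x; split; first by left.
  move=> w' /[dup] /(_ x) [/(_ xQ) -> _] /(_ y) [hy hy'].
  move: (hy' yQ); rewrite /= => /andP[ay _]; split => //.
  by apply: ltW; rewrite -lte_fin (le_lt_trans wa ay).
- exists y; split; first by right.
  move=> w' /[dup] /(_ x) [/(_ xQ) -> _] /(_ y) [hy hy'].
  move: (hy' yQ); rewrite /= => /andP[_ yb]; split => //.
  by apply: ltW; rewrite -lte_fin (lt_le_trans yb bw).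
Qed.

Lemma not_det w Q x y : y \notin Q -> x != y ->
  ((x \notin Q /\ exists s, I x s /\ I y s) \/ (x \in Q /\ I y (w x))) ->
  ~ edge_determined I w Q x y.
Proof.
move=> yQ xy H.
have [x1 [y1 [x2 [y2 [hx1 [hx2 [hy1 [hy2 [l1 l2]]]]]]]]] :
  exists x1 y1 x2 y2 : R, (x \in Q -> x1 = w x) /\ (x \in Q -> x2 = w x) /\
   (x \in Q \/ (I x x1 /\ I x x2)) /\ (I y y1 /\ I y y2) /\ y1 < x1 /\ x2 < y2.
  case: H => [[xQ [s [hxs hys]]]|[xQ hyw]].
  - have [t1 [ht1 st1]] := oint_up hxs; have [t2 [ht2 st2]] := oint_up hys.
    set t := Num.min t1 t2.
    have st : s < t by rewrite /t lt_min st1.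
    have hxt : I x t by apply: (oint_conv hxs ht1); rewrite ltW //= /t ge_min lexx.
    have hyt : I y t by apply: (oint_conv hys ht2); rewrite ltW //= /t ge_min lexx orbT.
    exists t, s, s, t; do !split => //; try by rewrite (negPf xQ).
    by right.
  - have [l [hl ll]] := oint_down hyw; have [h [hh hh']] := oint_up hyw.
    exists (w x), l, (w x), h; do !split => //; by left.
pose upd (x0 y0 : R) := fun z : V => if z == x then x0 else if z == y then y0 else
   (if z \in Q then w z else pt z).
have cons (x0 y0 : R) : (x \in Q -> x0 = w x) -> (x \notin Q -> I x x0) -> I y y0 ->
    consistent I w Q (upd x0 y0).
  move=> h1 h2 h3 z; rewrite /upd; case: eqP => [->|zx]; first by split.
  case: eqP => [->|zy]; first by split => //; rewrite (negPf yQ).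
  split => [->//|/negPf->]; exact: ptP.
have c1 : consistent I w Q (upd x1 y1).
  apply: cons => //; [by case: hy1 => [->|[]]|by case: hy2].
have c2 : consistent I w Q (upd x2 y2).
  apply: cons => //; [by case: hy1 => [->|[]]|by case: hy2].
have ux (x0 y0 : R) : upd x0 y0 x = x0 by rewrite /upd /= eqxx.
have uy (x0 y0 : R) : upd x0 y0 y = y0 by rewrite /upd /= eq_sym (negPf xy) eqxx.
move=> [z [[->|->] Hz]].
- by have := Hz _ c1; rewrite ux uy => -[_]; rewrite leNgt l1.
- by have := Hz _ c2; rewrite ux uy => -[+ _]; rewrite leNgt l2.
Qed.

Lemma cover w Q u : feasible (star v) I w Q -> v \notin Q -> u != v -> u \in Q.
Proof.
move=> fQ vQ uv; case: (boolP (u \in Q)) => // uQ.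
have e : star v v u by rewrite /star eqxx uv.
exfalso; apply: (@not_det w Q v u uQ _ _ (fQ _ _ e)); first by rewrite eq_sym.
left; split => //; have [s [h1 h2]] := hedge _ uv; by exists s.
Qed.

Lemma mand_leaf w u : u != v -> (mandatory (star v) I w u <-> I u (w v)).
Proof.
move=> uv; split.
- move=> M; apply: contrapT => nI.
  have: u \in [set~ u]%SET; last by rewrite !inE eqxx.
  apply: M => x y; rewrite /star => /orP[]/andP[/eqP -> yv].
  + case: (eqVneq y u) => [->|yu]; first by apply: det_out => //; rewrite !inE eq_sym.
    by apply: det_in; rewrite !inE // eq_sym.
  + case: (eqVneq x u) => [->|xu]; first by apply/det_sym/det_out => //; rewrite !inE eq_sym.
    by apply: det_in; rewrite !inE // eq_sym.
- move=> hI Q fQ; case: (boolP (u \in Q)) => // uQ.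
  have e : star v v u by rewrite /star eqxx uv.
  exfalso; apply: (@not_det w Q v u uQ _ _ (fQ _ _ e)); first by rewrite eq_sym.
  case: (boolP (v \in Q)) => vQ; [right|left]; split => //.
  have [s [h1 h2]] := hedge _ uv; by exists s.
Qed.

Lemma mand_center w : mandatory (star v) I w v <-> exists u, u != v /\ I v (w u).
Proof.
split.
- move=> M; apply: contrapT => nI.
  have: v \in [set~ v]%SET; last by rewrite !inE eqxx.
  have nI' u : u != v -> ~ I v (w u) by move=> uv h; apply: nI; exists u.
  apply: M => x y; rewrite /star => /orP[]/andP[/eqP -> yv].
  + by apply/det_sym/det_out; [rewrite !inE|exact: nI'].
  + by apply: det_out; [rewrite !inE|exact: nI'].
- move=> [u [uv hI]] Q fQ; case: (boolP (v \in Q)) => // vQ.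
  have e : star v u v by rewrite /star eqxx uv orbT.
  exfalso; apply: (@not_det w Q u v vQ uv _ (fQ _ _ e)).
  case: (boolP (u \in Q)) => uQ; [right|left]; split => //.
  have [s [h1 h2]] := hedge _ uv; by exists s.
Qed.

Lemma feasT w : feasible (star v) I w [set: V]%SET.
Proof. by move=> x y _; apply: det_in; rewrite inE. Qed.

End Comb.


Section Opt.
Variables (R : realType) (V : finType) (v : V) (a b : V -> \bar R).
Hypothesis hab : forall u, (a u < b u)%E.
Hypothesis hedge : forall u, u != v -> exists x, oint (a u) (b u) x /\ oint (a v) (b v) x.
Variable c : V -> R.
Hypothesis hc : forall u, 0 <= c u.
Local Notation I := (fun u => oint (a u) (b u)).
Implicit Types (Q : {set V}) (x y u : V) (w : V -> R).

Definition Mb w u := `[< mandatory (star v) I w u >].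
Definition sM w := \sum_(u | u != v) (Mb w u)%:R * c u.
Definition Asum := \sum_(u | u != v) c u.

Lemma feas_ge w Q : feasible (star v) I w Q ->
  Num.min (c v + sM w) (Asum + (Mb w v)%:R * c v) <= qcost c Q.
Proof.
move=> fQ; rewrite /qcost; case: (boolP (v \in Q)) => vQ.
- rewrite ge_min; apply/orP; left.
  rewrite (bigD1 v vQ) /= lerD2l /sM big_mkcond [leRHS]big_mkcond /=.
  apply: ler_sum => u _; case: (eqVneq u v) => [->|uv] /=; first by rewrite andbF.
  case: (boolP (Mb w u)) => [/asboolP M|_] /=; first by rewrite mul1r ifT // ?andbT; exact: M _ fQ.
  by rewrite mul0r; case: ifP.
- have -> : Mb w v = false.
    by apply/negP => /asboolP M; move: (M _ fQ); rewrite (negPf vQ).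
  rewrite mul0r addr0 ge_min; apply/orP; right.
  rewrite /Asum big_mkcond [leRHS]big_mkcond /=.
  apply: ler_sum => u _; case: (eqVneq u v) => //= [->|uv].
    by case: ifP.
  by rewrite (@cover _ _ _ _ _ hab hedge _ _ _ fQ vQ uv).
Qed.

Lemma opt_ge w :
  Num.min (c v + sM w) (Asum + (Mb w v)%:R * c v) <= opt (star v) I c w.
Proof.
rewrite /opt; apply: le_bigmin; first exact/feas_ge/feasT.
by move=> Q /asboolP; apply: feas_ge.
Qed.
End Opt.


Section Int.
Context d (T : measurableType d) (R : realType) (P : probability T R).

Lemma mind (A : set T) : measurable A -> measurable_fun setT (EFin \o (\1_A : T -> R)).
Proof. by move=> mA; apply/measurable_realfun.measurable_EFinP; exact: measurable_indic. Qed.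

Lemma int_ind_sum (J : finType) (k : J -> R) (A : J -> set T) :
  (forall j, 0 <= k j) -> (forall j, measurable (A j)) ->
  (\int[P]_x (\sum_j k j * \1_(A j) x)%:E = \sum_j (k j)%:E * P (A j))%E.
Proof.
move=> k0 mA.
under eq_integral do rewrite -sumEFin.
rewrite ge0_integral_sum //; last first.
  by move=> j x _; rewrite lee_fin mulr_ge0 // /indic; case: (_ \in _).
  move=> j; under eq_fun do rewrite EFinM; apply: measurable_funeM; exact: mind.
apply: eq_bigr => j _.
under eq_integral do rewrite EFinM.
rewrite ge0_integralZl_EFin //; last exact: mind.
  by rewrite integral_indic // setIT.
Qed.

Lemma le_int_nn (f g : T -> \bar R) : (forall x, 0 <= f x)%E -> (forall x, f x <= g x)%E ->
  (\int[P]_x f x <= \int[P]_x g x)%E.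
Proof.
move=> f0 fg.
have g0 x : (0 <= g x)%E by apply: le_trans (fg x).
rewrite !ge0_integralTE //; apply: le_ereal_sup => _ [h hf <-]; exists h => //.
by move=> x; apply: le_trans (fg x).
Qed.
End Int.


Section M.
Context {R : realType}.
Lemma moint (a b : \bar R) : measurable (oint a b).
Proof.
have -> : oint a b = [set x | (a < x%:E)%E] `&` [set x | (x%:E < b)%E].
  by apply/seteqP; split => x /=; rewrite /oint /= => /andP.
apply: measurableI.
- case: a => [r| |].
  + have -> : [set x : R | (r%:E < x%:E)%E] = [set` `]r, +oo[%R].
      by apply/seteqP; split => x /=; rewrite in_itv /= andbT lte_fin.
    exact: measurable_itv.
  + have -> : [set x : R | (+oo < x%:E)%E] = set0 by apply/seteqP; split => x //=.
    exact: measurable0.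
  + have -> : [set x : R | (-oo < x%:E)%E] = setT.
      by apply/seteqP; split => x //= _; rewrite ltNyr.
    exact: measurableT.
- case: b => [r| |].
  + have -> : [set x : R | (x%:E < r%:E)%E] = [set` `]-oo, r[%R].
      by apply/seteqP; split => x /=; rewrite in_itv /= lte_fin.
    exact: measurable_itv.
  + have -> : [set x : R | (x%:E < +oo)%E] = setT.
      by apply/seteqP; split => x //= _; rewrite ltry.
    exact: measurableT.
  + have -> : [set x : R | (x%:E < -oo)%E] = set0 by apply/seteqP; split => x //=.
    exact: measurable0.
Qed.
End M.


Lemma in_asbool T (A : set T) (t : T) (Pr : Prop) : (A t <-> Pr) -> (t \in A) = `[< Pr >].
Proof.
move=> H; apply/idP/idP => [/set_mem/H/asboolP//|/asboolP/H/mem_set//].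
Qed.

Theorem lemmaC1 (R : realType) (d : measure_display) (T : measurableType d)
  (P : probability T R) (V : finType) (v : V)
  (W : V -> T -> R) (a b : V -> \bar R) (c : V -> R)
  (hWm : forall u, measurable_fun setT (W u))
  (hind : mutually_independent P W)
  (hcont : forall u, atomless P (W u))
  (hsupp : forall u, min_support_interval P (W u) (a u) (b u))
  (hedge : forall u, u != v -> exists x, oint (a u) (b u) x /\ oint (a v) (b v) x)
  (hc : forall u, 0 <= c u) :
  let I := fun u => oint (a u) (b u) in
  let p := pmand P (star v) I W in
  let EL := ((c v)%:E + \sum_(u | u != v) p u * (c u)%:E)%E in
  let ER := (p v * (c v)%:E + (\sum_(u | u != v) c u)%:E)%E in
  EL = ER ->
  (EL <= (4 / 3)%:E * EOPT P (star v) I c W)%E.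
Proof.
move=> I p EL ER hEq.
have hab u : (a u < b u)%E by case: (hsupp u).
pose Eu u := W v @^-1` oint (a u) (b u).
pose Ev := [set t | exists u, u != v /\ oint (a v) (b v) (W u t)].
have mEu u : measurable (Eu u).
  by have := hWm v measurableT _ (moint (a u) (b u)); rewrite setTI.
have mEv : measurable Ev.
  have -> : Ev = \bigcup_(u in [set u | u != v]) (W u @^-1` oint (a v) (b v)).
    by apply/seteqP; split => t /= [u]; [move=> [uv h]|move=> uv h]; exists u.
  apply: fin_bigcup_measurable; first exact: finite_finset.
  by move=> u _; have := hWm u measurableT _ (moint (a v) (b v)); rewrite setTI.
have puE u : u != v -> p u = P (Eu u).
  move=> uv; rewrite /p /pmand; congr (P _); apply/seteqP; split => t /=.
  - by move/(@mand_leaf _ _ v a b hab hedge (fun x => W x t) u uv).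
  - by move/(@mand_leaf _ _ v a b hab hedge (fun x => W x t) u uv).
have pvE : p v = P Ev.
  rewrite /p /pmand; congr (P _); apply/seteqP; split => t; rewrite /Ev /=.
  - by move/(@mand_center _ _ v a b hab hedge (fun x => W x t)).
  - by move=> H; apply/(@mand_center _ _ v a b hab hedge (fun x => W x t)).
have indep u : P (Eu u `&` ~` Ev) = (P (Eu u) * P (~` Ev))%E.
  pose B1 x := if x == v then oint (a u) (b u) else ~` oint (a v) (b v).
  pose B0 x := if x == v then setT else ~` oint (a v) (b v).
  have mB1 x : measurable (B1 x).
    by rewrite /B1; case: ifP => _; [exact: moint|apply: measurableC; exact: moint].
  have mB0 x : measurable (B0 x).
    by rewrite /B0; case: ifP => _; [exact: measurableT|apply: measurableC; exact: moint].
  have e1 : Eu u `&` ~` Ev = \bigcap_(x in [set: V]) (W x @^-1` B1 x).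
    apply/seteqP; split => t /=.
    - move=> [hu nEv] x _; rewrite /B1; case: eqP => [->//|/eqP xv] /= hx.
      by apply: nEv; exists x.
    - move=> H; split; first by move: (H v Logic.I); rewrite /B1 eqxx.
      move=> [x [xv hx]]; move: (H x Logic.I); rewrite /B1 (negPf xv) /=; exact.
  have e0 : ~` Ev = \bigcap_(x in [set: V]) (W x @^-1` B0 x).
    apply/seteqP; split => t /=.
    - move=> nEv x _; rewrite /B0; case: eqP => [->//|/eqP xv] /= hx.
      by apply: nEv; exists x.
    - move=> H [x [xv hx]]; move: (H x Logic.I); rewrite /B0 (negPf xv) /=; exact.
  rewrite e1 e0 !hind // [X in X = _](bigD1 v) //= [X in _ = (_ * X)%E](bigD1 v) //=.
  rewrite /B1 /B0 !eqxx preimage_setT probability_setT mul1e.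
  by congr (_ * _)%E; apply: eq_bigr => x /negPf xv; rewrite xv.
have PE A : measurable A -> P A = (fine (P A))%:E.
  move=> mA; rewrite fineK // ge0_fin_numE // (le_lt_trans (probability_le1 _ mA)) //.
  by rewrite ltry.
set pv := fine (P Ev).
pose qu u := fine (P (Eu u)).
have pv01 : 0 <= pv <= 1.
  by rewrite -!lee_fin -PE // measure_ge0 probability_le1.
have qu0 u : 0 <= qu u by rewrite -lee_fin -PE // measure_ge0.
have puv u : fine (P (Eu u `&` Ev)) = qu u * pv.
  have h1 : P (Eu u) = (P (Eu u `&` Ev) + P (Eu u `&` ~` Ev))%E.
    rewrite -measureU //; last 3 first.
    - exact: measurableI.
    - by apply: measurableI => //; apply: measurableC.
    - by rewrite setIACA setICr setI0.
    by rewrite -setIUr setUv setIT.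
  move: h1; rewrite indep probability_setC // (PE _ (mEu u)) (PE _ mEv).
  rewrite (PE (Eu u `&` Ev)); last exact: measurableI.
  rewrite -EFinB -EFinM -EFinD /= => -[] h; rewrite /pv /qu; nra.
set C := c v.
set A := \sum_(u | u != v) c u.
set q := \sum_(u | u != v) qu u * c u.
have q0 : 0 <= q by apply: sumr_ge0 => u _; apply: mulr_ge0.
have A0 : 0 <= A by apply: sumr_ge0.
have C0 : 0 <= C by exact: hc.
have ELr : EL = (C + q)%:E.
  rewrite /EL (eq_bigr (fun u => (qu u * c u)%:E)); last first.
    by move=> u uv; rewrite puE // (PE _ (mEu u)) EFinM.
  by rewrite sumEFin EFinD.
have ERr : ER = (pv * C + A)%:E by rewrite /ER pvE (PE _ mEv) -EFinM -EFinD.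
have hEq' : C + q = pv * C + A.
  by move: hEq; rewrite ELr ERr => -[].
have key (k g be de : R) : 0 <= k -> 0 <= g -> 0 <= be -> 0 <= de ->
  (forall m s, (m = 0 \/ m = 1) -> 0 <= s <= A ->
     k + g * m + be * s + de * m * s <= Num.min (C + s) (A + m * C)) ->
  ((k + g * pv + be * q + de * pv * q)%:E <= EOPT P (star v) I c W)%E.
  move=> k0 g0 b0 d0 Hpt.
  pose J := (bool + (V + V))%type.
  pose kk (j : J) : R := match j with
    | inl true => k | inl false => g
    | inr (inl u) => if u == v then 0 else be * c u
    | inr (inr u) => if u == v then 0 else de * c u end.
  pose AA (j : J) : set T := match j with
    | inl true => setT | inl false => Ev
    | inr (inl u) => Eu u | inr (inr u) => Eu u `&` Ev end.
  have kk0 j : 0 <= kk j.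
    by case: j => [[]|[]u] //=; case: ifP => // _; apply: mulr_ge0.
  have mAA j : measurable (AA j).
    by case: j => [[]|[]u] //=; apply: measurableI.
  have sif (F : V -> R) : \sum_u (if u == v then 0 else F u) = \sum_(u | u != v) F u.
    by rewrite [RHS]big_mkcond; apply: eq_bigr => u _; case: eqP.
  have -> : ((k + g * pv + be * q + de * pv * q)%:E =
      \int[P]_t (\sum_j kk j * \1_(AA j) t)%:E)%E.
    rewrite int_ind_sum //.
    rewrite (eq_bigr (fun j => (kk j * fine (P (AA j)))%:E)); last first.
      by move=> j _; rewrite EFinM -PE.
    rewrite sumEFin; congr EFin.
    rewrite big_sumType big_bool big_sumType /= probability_setT /=.
    have e1 : \sum_u (if u == v then 0 else be * c u) * fine (P (Eu u)) = be * q.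
      rewrite (eq_bigr (fun u => if u == v then 0 else be * (qu u * c u))).
        by rewrite sif -mulr_sumr.
      by move=> u _; case: eqP => _; rewrite ?mul0r // /qu; ring.
    have e2 : \sum_u (if u == v then 0 else de * c u) * fine (P (Eu u `&` Ev)) =
        de * pv * q.
      rewrite (eq_bigr (fun u => if u == v then 0 else de * pv * (qu u * c u))).
        by rewrite sif -mulr_sumr.
      by move=> u _; case: eqP => _; rewrite ?mul0r // puv; ring.
    rewrite e1 e2 -/pv; ring.
  apply: le_int_nn.
    move=> t; rewrite lee_fin; apply: sumr_ge0 => j _; apply: mulr_ge0 => //.
  move=> t; rewrite lee_fin.
  set w := fun x => W x t.
  have hm : \1_Ev t = (Mb _ _ v a b w v)%:R :> R.
    rewrite /indic (@in_asbool _ _ _ (mandatory (star v) I w v)) //.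
    exact: iff_sym (@mand_center _ _ v a b hab hedge w).
  have hu u : u != v -> \1_(Eu u) t = (Mb _ _ v a b w u)%:R :> R.
    move=> uv; rewrite /indic (@in_asbool _ _ _ (mandatory (star v) I w u)) //.
    exact: iff_sym (@mand_leaf _ _ v a b hab hedge w u uv).
  apply: le_trans (@opt_ge _ _ v a b hab hedge c hc w).
  have -> : \sum_j kk j * \1_(AA j) t = k + g * (Mb _ _ v a b w v)%:R +
      be * sM _ _ v a b c w + de * (Mb _ _ v a b w v)%:R * sM _ _ v a b c w.
    rewrite big_sumType big_bool big_sumType /=.
    have -> : \1_setT t = 1 :> R by rewrite /indic in_setT.
    rewrite hm /sM.
    have e1 : \sum_u (if u == v then 0 else be * c u) * \1_(Eu u) t =
        be * \sum_(u | u != v) (Mb _ _ v a b w u)%:R * c u.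
      rewrite (eq_bigr (fun u => if u == v then 0 else be * ((Mb _ _ v a b w u)%:R * c u))).
        by rewrite sif -mulr_sumr.
      by move=> u _; case: eqP => [_|/eqP uv]; rewrite ?mul0r // hu //; ring.
    have e2 : \sum_u (if u == v then 0 else de * c u) * \1_(Eu u `&` Ev) t =
        de * (Mb _ _ v a b w v)%:R * \sum_(u | u != v) (Mb _ _ v a b w u)%:R * c u.
      rewrite (eq_bigr (fun u => if u == v then 0 else
          de * (Mb _ _ v a b w v)%:R * ((Mb _ _ v a b w u)%:R * c u))).
        by rewrite sif -mulr_sumr.
      move=> u _; case: eqP => [_|/eqP uv]; rewrite ?mul0r //.
      by rewrite indicI /= hu // hm; ring.
    rewrite e1 e2; ring.
  apply: Hpt; first by case: (Mb _ _ _ _ _ _ _); [right|left].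
  apply/andP; split; first by apply: sumr_ge0 => u _; apply: mulr_ge0.
  apply: ler_sum => u _; case: (Mb _ _ _ _ _ _ _) => /=; rewrite ?mul1r ?mul0r //.
have fin (E : R) : (E%:E <= EOPT P (star v) I c W)%E -> C + q <= 4 / 3 * E ->
    (EL <= (4 / 3)%:E * EOPT P (star v) I c W)%E.
  move=> hE hCE; rewrite ELr.
  have h43 : (0 <= (4 / 3 : R)%:E)%E by rewrite lee_fin; lra.
  apply: le_trans (lee_wpmul2l h43 hE).
  by rewrite -EFinM lee_fin.
have [pv0 pv1] : 0 <= pv /\ pv <= 1 by move/andP: pv01.
case: (boolP ((C <= A) && (0 < A))) => [/andP[CA Ap]|hn].
- have Ane : A != 0 by rewrite gt_eqF.
  set be := (A - C) / A.
  have beA : be * A = A - C by rewrite /be divfK.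
  have de1 : be + C / A = 1 by rewrite /be -mulrDl subrK divff.
  have be0 : 0 <= be by rewrite /be divr_ge0 // subr_ge0.
  have cA0 : 0 <= C / A by rewrite divr_ge0 // ltW.
  have be1 : be <= 1 by lra.
  have cAA : C / A * A = C by rewrite divfK.
  apply: (fin _ (key C 0 be (C / A) C0 (lexx 0) be0 cA0 _)); last first.
    have hq : q = pv * C + A - C by lra.
    have AE : A * (C + 0 * pv + be * q + C / A * pv * q) = A * C + q * q.
      have -> : A * (C + 0 * pv + be * q + C / A * pv * q) =
        A * C + (be * A) * q + (C / A * A) * pv * q by ring.
      rewrite beA cAA hq; ring.
    set E := C + 0 * pv + be * q + C / A * pv * q in AE *.
    have hC : A - q <= C by nra.
    have h1 : 0 <= A * (C - (A - q)) by apply: mulr_ge0; lra.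
    have h2 : 0 <= (2 * q - A) ^+ 2 by apply: sqr_ge0.
    have : 3 * (C + q) * A <= 4 * (A * E) by rewrite AE; nra.
    move=> h; nra.
  move=> m s hm /andP[s0 sA].
  have h1 : be * s <= s by nra.
  have h2 : be * s <= be * A by nra.
  have h3 : be * s + C / A * s = s by rewrite -mulrDl de1 mul1r.
  rewrite le_min; apply/andP; case: hm => ->; split; nra.
- have AC : A <= C.
    move: hn; rewrite negb_and -ltNge -leNgt => /orP[/ltW//|h]; lra.
  have CA0 : 0 <= C - A by lra.
  apply: (fin _ (key A (C - A) 0 1 A0 CA0 (lexx 0) ler01 _)); last first.
    have hq : q = pv * C + A - C by lra.
    have h1 : 0 <= C * (2 * pv - 1) ^+ 2 by apply: mulr_ge0 => //; apply: sqr_ge0.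
    rewrite hq; nra.
  move=> m s [->|->] /andP[s0 sA]; rewrite le_min; apply/andP; split; lra.
Qed.
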